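(* Let $n\ge 1$, let $a_1<\dots<a_n$ be keys stored in a sorted array, let $p=(p_1,\dots,p_n)$ be the true probability distribution over keys, and let $\hat p=(\hat p_1,\dots,\hat p_n)$ be any predicted probability distribution over $[n]$. Let $\eta$ be the earth mover's distance between $p$ and $\hat p$. When the target key is $a=a_i$ with probability $p_i$, the algorithm $\mathcal{A}$ described in the context (given $\hat p$) finds the target, and its expected number of comparisons $\sum_{i=1}^n p_i C(a_i)$ satisfies $$\sum_{i=1}^n p_i C(a_i)\;\le\; 4H(p)+8\max(\log\eta+2,\,1)+8 \;=\; O\big(H(p)+\max(\log \eta,0)\big).$$
   Context: All logarithms are base 2. $H(p)=-\sum_{i=1}^n p_i\log p_i$ is the entropy of $p$ (with $0\log 0=0$). The earth mover's distance between distributions $P,Q$ on $[n]$ is $\inf_{\gamma\in\Pi(P,Q)}\mathbb{E}_{(x,y)\sim\gamma}|x-y|$, where $\Pi(P,Q)$ is the set of couplings of $P$ and $Q$ (joint distributions on $[n]\times[n]$ with marginals $P$ and $Q$). A comparison of the target $a$ with a key $a_j$ returns whether $a<a_j$, $a=a_j$ or $a>a_j$, and counts as one query; $C(a_i)$ denotes the number of comparisons made by the algorithm when the target is $a_i$. Algorithm $\mathcal{A}$ (input: $\hat p$ and target $a\in\{a_1,\dots,a_n\}$): maintain a search range $[\ell,r]$ of indices, initially $\ell=1,r=n$, always containing the index of $a$. Run iterations $i=0,1,2,\dots$, each with two phases: (1) Bisection: repeat the following step $2^i$ times (stopping if $a$ is found). With $S=\sum_{j=\ell}^r\hat p_j$,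 pick an index $k\in[\ell,r]$ with $\sum_{j=\ell}^{k-1}\hat p_j\le S/2$ and $\sum_{j=k+1}^{r}\hat p_j\le S/2$; compare $a$ with $a_k$; if equal, return $k$; otherwise replace the range by $[\ell,k-1]$ or $[k+1,r]$ according to the comparison. (2) Binary search at the endpoints: with the current range $[\ell,r]$, set $d=\min(2^{2^i},r-\ell)$; compare $a$ with $a_{\ell+d}$ and $a_{r-d}$ to determine whether $a$ lies in $[a_\ell,a_{\ell+d}]$ or $[a_{r-d},a_r]$. If so, run standard binary search (always querying the middle of the current range) on that index range until $a$ is found. Otherwise start iteration $i+1$ with range $[\ell+d+1,r-d-1]$. *)

(* Defs.v *)
From Stdlib Require Import Reals Lra Lia Arith List.
Open Scope R_scope.

Definition log2 (x : R) : R := ln x / ln 2.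

(* sum_{j=l}^{r} f j  (empty, i.e. 0, when r < l) *)
Definition sumR (l r : nat) (f : nat -> R) : R :=
  fold_right (fun j acc => f j + acc) 0 (seq l (S r - l)).

Definition plogp (x : R) : R := if Req_EM_T x 0 then 0 else x * log2 x.
Definition entropy (n : nat) (p : nat -> R) : R := - sumR 1 n (fun i => plogp (p i)).

Definition is_distr (n : nat) (p : nat -> R) : Prop :=
  (forall i, (1 <= i <= n)%nat -> 0 <= p i) /\ sumR 1 n p = 1.

Definition is_coupling (n : nat) (P Q : nat -> R) (g : nat -> nat -> R) : Prop :=
  (forall x y, (1 <= x <= n)%nat -> (1 <= y <= n)%nat -> 0 <= g x y) /\
  (forall x, (1 <= x <= n)%nat -> sumR 1 n (fun y => g x y) = P x) /\
  (forall y, (1 <= y <= n)%nat -> sumR 1 n (fun x => g x y) = Q y).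

Definition coupling_cost (n : nat) (g : nat -> nat -> R) : R :=
  sumR 1 n (fun x => sumR 1 n (fun y => g x y * Rabs (INR x - INR y))).

Definition is_emd (n : nat) (P Q : nat -> R) (eta : R) : Prop :=
  (forall g, is_coupling n P Q g -> eta <= coupling_cost n g) /\
  (forall b, (forall g, is_coupling n P Q g -> b <= coupling_cost n g) -> b <= eta).

Definition cmpR (x y : R) : comparison :=
  match total_order_T x y with
  | inleft (left _) => Lt
  | inleft (right _) => Eq
  | inright _ => Gt
  end.

Definition valid_median (n : nat) (phat : nat -> R) (med : nat -> nat -> nat) : Prop :=
  forall l r, (1 <= l <= r)%nat -> (r <= n)%nat ->
    let k := med l r in
    let Sm := sumR l r phat in
    (l <= k <= r)%nat /\
    sumR l (k - 1) phat <= Sm / 2 /\ sumR (S k) r phat <= Sm / 2.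

Definition add_cnt (c : nat) (o : option (nat * nat)) : option (nat * nat) :=
  match o with Some (x, c') => Some (x, (c + c')%nat) | None => None end.

(* Standard binary search on the index range [l,r] (query the middle),
   with fuel; returns (found index, number of comparisons). *)
Fixpoint bsearch (a : nat -> R) (fuel l r : nat) (x : R) : option (nat * nat) :=
  match fuel with
  | O => None
  | S f =>
    let m := ((l + r) / 2)%nat in
    match cmpR x (a m) with
    | Eq => Some (m, 1%nat)
    | Lt => add_cnt 1 (bsearch a f l (m - 1) x)
    | Gt => add_cnt 1 (bsearch a f (S m) r x)
    end
  end.

Inductive bres := BFound (k c : nat) | BRange (l r c : nat).

Definition add_bres (c : nat) (b : bres) : bres :=
  match b with
  | BFound k c' => BFound k (c + c')
  | BRange l r c' => BRange l r (c + c')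
  end.

Fixpoint bisect (a : nat -> R) (med : nat -> nat -> nat) (k l r : nat) (x : R) : bres :=
  match k with
  | O => BRange l r 0
  | S k' =>
    let m := med l r in
    match cmpR x (a m) with
    | Eq => BFound m 1
    | Lt => add_bres 1 (bisect a med k' l (m - 1) x)
    | Gt => add_bres 1 (bisect a med k' (S m) r x)
    end
  end.

(* Algorithm A, iterations i, i+1, ... from range [l,r], with fuel.
   Returns Some (index found, total number of comparisons). *)
Fixpoint algA (a : nat -> R) (med : nat -> nat -> nat) (fuel i l r : nat) (x : R)
  : option (nat * nat) :=
  match fuel with
  | O => None
  | S f =>
    match bisect a med (2 ^ i) l r x with
    | BFound k c => Some (k, c)
    | BRange l' r' c =>
      let d := Nat.min (2 ^ (2 ^ i)) (r' - l') in
      let c' := (c + 2)%nat in   (* the two endpoint comparisons *)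
      let c1 := cmpR x (a (l' + d)%nat) in
      let c2 := cmpR x (a (r' - d)%nat) in
      match c1, c2 with
      | Eq, _ => Some ((l' + d)%nat, c')
      | _, Eq => Some ((r' - d)%nat, c')
      | Lt, _ => add_cnt c' (bsearch a f l' (l' + d) x)
      | _, Gt => add_cnt c' (bsearch a f (r' - d) r' x)
      | _, _ => add_cnt c' (algA a med f (S i) (S (l' + d)) (r' - d - 1) x)
      end
    end
  end.

(* the bound's term max(log eta + 2, 1), with log 0 = -infinity *)
Definition log_term (eta : R) : R :=
  if Rlt_dec 0 eta then Rmax (log2 eta + 2) 1 else 1.

(* Main.v *)
Require Import Defs.
From Stdlib Require Import Reals Lra Lia List Classical.
Open Scope R_scope.

Definition SS (l k : nat) (f : nat -> R) : R :=
  fold_right (fun j acc => f j + acc) 0 (seq l k).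

Lemma SS_S l k f : SS l (S k) f = f l + SS (S l) k f.
Proof. reflexivity. Qed.

Lemma SS_0 l f : SS l 0 f = 0.
Proof. reflexivity. Qed.

Lemma SS_ext l k f g : (forall j, (l <= j < l + k)%nat -> f j = g j) -> SS l k f = SS l k g.
Proof.
  revert l; induction k; intros l H; [reflexivity|].
  rewrite !SS_S, (H l) by lia. rewrite (IHk (S l)); [reflexivity|]. intros; apply H; lia.
Qed.

Lemma SS_le l k f g : (forall j, (l <= j < l + k)%nat -> f j <= g j) -> SS l k f <= SS l k g.
Proof.
  revert l; induction k; intros l H; [rewrite !SS_0; lra|].
  rewrite !SS_S. assert (f l <= g l) by (apply H; lia).
  assert (SS (S l) k f <= SS (S l) k g) by (apply IHk; intros; apply H; lia). lra.
Qed.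

Lemma SS_add l k f g : SS l k (fun j => f j + g j) = SS l k f + SS l k g.
Proof. revert l; induction k; intros l; [rewrite !SS_0; lra|]. rewrite !SS_S, IHk. lra. Qed.

Lemma SS_scal l k c f : SS l k (fun j => c * f j) = c * SS l k f.
Proof. revert l; induction k; intros l; [rewrite !SS_0; lra|]. rewrite !SS_S, IHk. lra. Qed.

Lemma SS_split l a b f : SS l (a + b) f = SS l a f + SS (l + a) b f.
Proof.
  revert l; induction a; intros l; simpl.
  - rewrite SS_0, Nat.add_0_r. lra.
  - rewrite !SS_S. replace (l + S a)%nat with (S l + a)%nat by lia. rewrite IHa. lra.
Qed.

Lemma SS_zero l k : SS l k (fun _ => 0) = 0.
Proof. revert l; induction k; intros l; [reflexivity|]. rewrite SS_S, IHk. lra. Qed.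

Lemma SS_nonneg l k f : (forall j, (l <= j < l + k)%nat -> 0 <= f j) -> 0 <= SS l k f.
Proof. intros H. rewrite <- (SS_zero l k). apply SS_le. exact H. Qed.

Lemma SS_single l k f j : (forall j, (l <= j < l + k)%nat -> 0 <= f j) ->
  (l <= j < l + k)%nat -> f j <= SS l k f.
Proof.
  revert l; induction k; intros l H Hj; [lia|].
  rewrite SS_S. destruct (Nat.eq_dec j l) as [->|Hne].
  - assert (0 <= SS (S l) k f) by (apply SS_nonneg; intros; apply H; lia). lra.
  - assert (0 <= f l) by (apply H; lia).
    assert (f j <= SS (S l) k f) by (apply IHk; [intros; apply H|]; lia). lra.
Qed.

Lemma sumR_SS l r f : sumR l r f = SS l (S r - l) f.
Proof. reflexivity. Qed.

Lemma sumR_ext l r f g : (forall j, (l <= j <= r)%nat -> f j = g j) -> sumR l r f = sumR l r g.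
Proof. intros H. rewrite !sumR_SS. apply SS_ext. intros; apply H; lia. Qed.

Lemma sumR_le l r f g : (forall j, (l <= j <= r)%nat -> f j <= g j) -> sumR l r f <= sumR l r g.
Proof. intros H. rewrite !sumR_SS. apply SS_le. intros; apply H; lia. Qed.

Lemma sumR_add l r f g : sumR l r (fun j => f j + g j) = sumR l r f + sumR l r g.
Proof. rewrite !sumR_SS. apply SS_add. Qed.

Lemma sumR_scal l r c f : sumR l r (fun j => c * f j) = c * sumR l r f.
Proof. rewrite !sumR_SS. apply SS_scal. Qed.

Lemma sumR_nonneg l r f : (forall j, (l <= j <= r)%nat -> 0 <= f j) -> 0 <= sumR l r f.
Proof. intros H. rewrite !sumR_SS. apply SS_nonneg. intros; apply H; lia. Qed.

Lemma sumR_single l r f j : (forall j, (l <= j <= r)%nat -> 0 <= f j) ->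
  (l <= j <= r)%nat -> f j <= sumR l r f.
Proof. intros H Hj. rewrite !sumR_SS. apply SS_single; [intros; apply H|]; lia. Qed.

Lemma sumR_empty l r f : (r < l)%nat -> sumR l r f = 0.
Proof. intros H. rewrite sumR_SS. replace (S r - l)%nat with 0%nat by lia. reflexivity. Qed.

Lemma sumR_split l m r f : (l <= S m)%nat -> (m <= r)%nat ->
  sumR l r f = sumR l m f + sumR (S m) r f.
Proof.
  intros H1 H2. rewrite !sumR_SS.
  replace (S r - l)%nat with ((S m - l) + (S r - S m))%nat by lia.
  rewrite SS_split. replace (l + (S m - l))%nat with (S m) by lia. reflexivity.
Qed.

Lemma sumR_mono_range lo hi l r f : (forall j, (l <= j <= r)%nat -> 0 <= f j) ->
  (1 <= l)%nat -> (l <= lo)%nat -> (hi <= r)%nat -> sumR lo hi f <= sumR l r f.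
Proof.
  intros H H0 H1 H2. destruct (Nat.lt_ge_cases hi lo) as [Hlt|Hge].
  - rewrite sumR_empty by lia. apply sumR_nonneg; exact H.
  - rewrite (sumR_split l (lo - 1) r f) by lia.
    rewrite (sumR_split (S (lo - 1)) hi r f) by lia.
    replace (S (lo - 1)) with lo by lia.
    assert (0 <= sumR l (lo - 1) f) by (apply sumR_nonneg; intros; apply H; lia).
    assert (0 <= sumR (S hi) r f) by (apply sumR_nonneg; intros; apply H; lia).
    lra.
Qed.

Lemma sumR_ind l r lo hi f : (1 <= l)%nat -> (l <= lo)%nat -> (lo <= hi)%nat -> (hi <= r)%nat ->
  sumR l r (fun j => if andb (Nat.leb lo j) (Nat.leb j hi) then f j else 0) = sumR lo hi f.
Proof.
  intros H0 H1 H2 H3.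
  rewrite (sumR_split l (lo - 1) r) by lia.
  rewrite (sumR_split (S (lo - 1)) hi r) by lia.
  replace (S (lo - 1)) with lo by lia.
  rewrite (sumR_ext l (lo - 1) _ (fun _ => 0)).
  2:{ intros j Hj. destruct (Nat.leb_spec lo j); [lia|reflexivity]. }
  rewrite (sumR_ext (S hi) r _ (fun _ => 0)).
  2:{ intros j Hj. destruct (Nat.leb_spec lo j); destruct (Nat.leb_spec j hi); simpl; try lia; reflexivity. }
  rewrite (sumR_ext lo hi _ f).
  2:{ intros j Hj. destruct (Nat.leb_spec lo j); destruct (Nat.leb_spec j hi); simpl; try lia; reflexivity. }
  rewrite !sumR_SS, !SS_zero. lra.
Qed.

Lemma cmpR_lt x y : x < y -> cmpR x y = Lt.
Proof. intros H. unfold cmpR. destruct (total_order_T x y) as [[H1|H1]|H1]; auto; lra. Qed.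
Lemma cmpR_eq x y : x = y -> cmpR x y = Eq.
Proof. intros H. unfold cmpR. destruct (total_order_T x y) as [[H1|H1]|H1]; auto; lra. Qed.
Lemma cmpR_gt x y : y < x -> cmpR x y = Gt.
Proof. intros H. unfold cmpR. destruct (total_order_T x y) as [[H1|H1]|H1]; auto; lra. Qed.

Definition incr (n : nat) (a : nat -> R) :=
  forall i j, (1 <= i)%nat -> (i < j)%nat -> (j <= n)%nat -> a i < a j.

Lemma cmp_idx n a i m : incr n a -> (1 <= i <= n)%nat -> (1 <= m <= n)%nat ->
  cmpR (a i) (a m) = Nat.compare i m.
Proof.
  intros H Hi Hm. destruct (Nat.compare_spec i m).
  - subst; apply cmpR_eq; reflexivity.
  - apply cmpR_lt, H; lia.
  - apply cmpR_gt, H; lia.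
Qed.

Lemma bsearch_spec n a i : incr n a -> (1 <= i <= n)%nat ->
  forall fuel b l r, (1 <= l)%nat -> (l <= i <= r)%nat -> (r <= n)%nat ->
  (r + 1 - l <= fuel)%nat -> (r + 1 - l + 1 <= 2 ^ b)%nat ->
  exists c, bsearch a fuel l r (a i) = Some (i, c) /\ (c <= b)%nat.
Proof.
  intros Hinc Hi fuel. induction fuel as [|f IH]; intros b l r H1 H2 H3 H4 H5; [lia|].
  destruct b as [|b]; [simpl in H5; lia|].
  simpl bsearch. change (fst (Nat.divmod (l + r) 1 0 1)) with ((l+r)/2)%nat.
  set (m := ((l + r) / 2)%nat).
  assert (Hm : (l + r = 2 * m + (l + r) mod 2)%nat) by (apply Nat.div_mod_eq).
  assert (He : ((l + r) mod 2 < 2)%nat) by (apply Nat.mod_upper_bound; lia).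
  set (e := ((l + r) mod 2)%nat) in *. clearbody m e.
  assert (Hpb : (2 ^ S b = 2 * 2 ^ b)%nat) by reflexivity.
  rewrite (cmp_idx n a i m Hinc Hi) by lia.
  destruct (Nat.compare_spec i m).
  - subst. exists 1%nat. split; [reflexivity|lia].
  - destruct (IH b l (m - 1)%nat) as [c [Hc1 Hc2]]; try lia.
    rewrite Hc1. exists (1 + c)%nat. split; [reflexivity|lia].
  - destruct (IH b (S m) r) as [c [Hc1 Hc2]]; try lia.
    rewrite Hc1. exists (1 + c)%nat. split; [reflexivity|lia].
Qed.

Lemma bisect_spec n a med phat i : incr n a -> (1 <= i <= n)%nat ->
  valid_median n phat med ->
  forall k l r, (1 <= l)%nat -> (l <= i <= r)%nat -> (r <= n)%nat ->
  (exists c, bisect a med k l r (a i) = BFound i c /\ (c <= k)%nat) \/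
  (exists l' r', bisect a med k l r (a i) = BRange l' r' k /\
     (l <= l' <= i)%nat /\ (i <= r' <= r)%nat /\
     sumR l' r' phat <= sumR l r phat / 2 ^ k).
Proof.
  intros Hinc Hi Hmed k. induction k as [|k IH]; intros l r H1 H2 H3.
  - right. exists l, r. split; [reflexivity|]. split; [lia|]. split; [lia|].
    simpl. lra.
  - simpl bisect.
    destruct (Hmed l r ltac:(lia) H3) as [Hk [Hl Hr]]. cbv zeta in Hk, Hl, Hr.
    set (m := med l r) in *. clearbody m.
    rewrite (cmp_idx n a i m Hinc Hi) by lia.
    destruct (Nat.compare_spec i m).
    + subst. left. exists 1%nat. split; [reflexivity|lia].
    + destruct (IH l (m - 1)%nat) as [[c [E Hc]]|[l' [r' [E [Ha [Hb Hc]]]]]]; try lia.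
      * left. rewrite E. exists (1 + c)%nat. split; [reflexivity|simpl; lia].
      * right. rewrite E. exists l', r'. split; [reflexivity|]. split; [lia|]. split; [lia|].
        simpl. apply (Rle_trans _ _ _ Hc).
        assert (0 < 2 ^ k) by (apply pow_lt; lra).
        unfold Rdiv. replace (sumR l r phat * / (2 * 2 ^ k)) with (sumR l r phat / 2 * / 2 ^ k) by (field; lra).
        apply Rmult_le_compat_r; [left; apply Rinv_0_lt_compat; lra|].
        lra.
    + destruct (IH (S m) r) as [[c [E Hc]]|[l' [r' [E [Ha [Hb Hc]]]]]]; try lia.
      * left. rewrite E. exists (1 + c)%nat. split; [reflexivity|simpl; lia].
      * right. rewrite E. exists l', r'. split; [reflexivity|]. split; [lia|]. split; [lia|].
        simpl. apply (Rle_trans _ _ _ Hc).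
        assert (0 < 2 ^ k) by (apply pow_lt; lra).
        unfold Rdiv. replace (sumR l r phat * / (2 * 2 ^ k)) with (sumR l r phat / 2 * / 2 ^ k) by (field; lra).
        apply Rmult_le_compat_r; [left; apply Rinv_0_lt_compat; lra|].
        lra.
Qed.

Definition W (n : nat) (phat : nat -> R) (i D : nat) : R :=
  sumR (Nat.max 1 (i - D)) (Nat.min n (i + D)) phat.

Lemma pow2_ge1 k : (1 <= 2 ^ k)%nat.
Proof. induction k; simpl; lia. Qed.

Lemma pow2_mono a b : (a <= b)%nat -> (2 ^ a <= 2 ^ b)%nat.
Proof. intros; apply Nat.pow_le_mono_r; lia. Qed.

Lemma algA_spec n a med phat i : incr n a -> (1 <= i <= n)%nat ->
  valid_median n phat med -> (forall j, (1 <= j <= n)%nat -> 0 <= phat j) ->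
  forall fuel i0 l r K, (1 <= l)%nat -> (l <= i <= r)%nat -> (r <= n)%nat ->
  (r - l + 2 <= fuel)%nat -> (i0 <= K)%nat ->
  sumR l r phat / 2 ^ (2 ^ (S K) - 2 ^ i0) < W n phat i (2 ^ (2 ^ K)) ->
  exists c, algA a med fuel i0 l r (a i) = Some (i, c) /\
    (c <= 2 ^ (S K) - 2 ^ i0 + 2 * (K - i0) + 2 ^ K + 3)%nat.
Proof.
  intros Hinc Hi Hmed Hph fuel. induction fuel as [|f IH]; intros i0 l r K H1 H2 H3 H4 H5 HW; [lia|].
  simpl algA.
  assert (HpK : (2 ^ S K = 2 * 2 ^ K)%nat) by reflexivity.
  assert (Hpi : (2 ^ S i0 = 2 * 2 ^ i0)%nat) by reflexivity.
  assert (Hmono : (2 ^ i0 <= 2 ^ K)%nat) by (apply pow2_mono; lia).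
  destruct (bisect_spec n a med phat i Hinc Hi Hmed (2 ^ i0) l r H1 H2 H3)
    as [[c [E Hc]]|[l' [r' [E [Ha [Hb Hc]]]]]].
  { rewrite E. exists c. split; [reflexivity|lia]. }
  rewrite E.
  set (D0 := (2 ^ 2 ^ i0)%nat).
  assert (HD0 : (2 <= D0)%nat).
  { unfold D0. pose proof (pow2_ge1 i0). destruct (2 ^ i0)%nat as [|q]; [lia|]. simpl. pose proof (pow2_ge1 q). lia. }
  set (d := Nat.min D0 (r' - l')).
  assert (Hd : (d <= D0 /\ d <= r' - l' /\ (d = D0 \/ d = r' - l'))%nat) by lia.
  clearbody d.
  assert (Hbs : forall lb rb, (l' <= lb)%nat -> (lb <= i <= rb)%nat -> (rb <= r')%nat -> (rb - lb <= d)%nat ->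
    exists c : nat, add_cnt (2 ^ i0 + 2)%nat (bsearch a f lb rb (a i)) = Some (i, c) /\
      (c <= 2 ^ S K - 2 ^ i0 + 2 * (K - i0) + 2 ^ K + 3)%nat).
  { intros lb rb Q1 Q2 Q3 Q4.
    destruct (bsearch_spec n a i Hinc Hi f (2 ^ i0 + 1) lb rb) as [c [Ec Hcb]]; try lia.
    - rewrite Nat.pow_add_r. simpl. fold D0. lia.
    - rewrite Ec. exists (2 ^ i0 + 2 + c)%nat. split; [reflexivity|lia]. }
  rewrite (cmp_idx n a i (l' + d) Hinc Hi) by lia.
  rewrite (cmp_idx n a i (r' - d) Hinc Hi) by lia.
  destruct (Nat.compare_spec i (l' + d)) as [Q|Q|Q].
  { exists (2 ^ i0 + 2)%nat. rewrite Q. split; [reflexivity|lia]. }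
  { destruct (Nat.compare_spec i (r' - d)) as [Q'|Q'|Q'].
    - exists (2 ^ i0 + 2)%nat. rewrite Q'. split; [reflexivity|lia].
    - apply Hbs; lia.
    - apply Hbs; lia. }
  destruct (Nat.compare_spec i (r' - d)) as [Q'|Q'|Q'].
  { exists (2 ^ i0 + 2)%nat. rewrite Q'. split; [reflexivity|lia]. }
  2:{ apply Hbs; lia. }
  assert (HdD : d = D0) by lia.
  assert (Hsub : sumR (S (l' + d)) (r' - d - 1) phat <= sumR l' r' phat).
  { apply sumR_mono_range; try lia. intros; apply Hph; lia. }
  assert (H2p : 0 < 2 ^ (2 ^ i0)) by (apply pow_lt; lra).
  destruct (Nat.eq_dec K i0) as [EK|NK].
  { exfalso. subst K.
    assert (Hwin : W n phat i (2 ^ 2 ^ i0) <= sumR l' r' phat).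
    { unfold W. fold D0. apply sumR_mono_range; try lia. intros; apply Hph; lia. }
    replace (2 ^ S i0 - 2 ^ i0)%nat with (2 ^ i0)%nat in HW by lia.
    lra. }
  destruct (IH (S i0) (S (l' + d)) (r' - d - 1)%nat K) as [c [Ec Hcb]]; try lia.
  { replace (2 ^ S K - 2 ^ i0)%nat with (2 ^ i0 + (2 ^ S K - 2 ^ S i0))%nat in HW
      by (pose proof (pow2_mono (S i0) (S K)); lia).
    rewrite pow_add in HW.
    assert (0 < 2 ^ (2 ^ S K - 2 ^ S i0)) by (apply pow_lt; lra).
    eapply Rle_lt_trans; [|exact HW].
    unfold Rdiv. replace (sumR l r phat * / (2 ^ 2 ^ i0 * 2 ^ (2 ^ S K - 2 ^ S i0)))
      with (sumR l r phat / 2 ^ 2 ^ i0 * / 2 ^ (2 ^ S K - 2 ^ S i0)) by (field; lra).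
    apply Rmult_le_compat_r; [left; apply Rinv_0_lt_compat; lra|].
    lra. }
  rewrite Ec. exists (2 ^ i0 + 2 + c)%nat. split; [reflexivity|].
  pose proof (pow2_mono (S i0) (S K)). lia.
Qed.

Lemma min_exists (P : nat -> Prop) N : P N -> exists K, P K /\ (K = 0%nat \/ ~ P (K - 1)%nat).
Proof.
  induction N as [|N IH]; intros H.
  - exists 0%nat. auto.
  - destruct (classic (P N)) as [HP|HP].
    + apply IH; exact HP.
    + exists (S N). split; [exact H|right]. replace (S N - 1)%nat with N by lia. exact HP.
Qed.

Lemma coupling_exists n p phat eta : is_emd n p phat eta ->
  exists g, is_coupling n p phat g /\ coupling_cost n g < eta + 1/4.
Proof.
  intros [_ H2]. apply NNPP. intros Hn.
  assert (eta + 1/4 <= eta).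
  { apply H2. intros g Hg. apply Rnot_lt_le. intros Hlt. apply Hn. exists g; auto. }
  lra.
Qed.

Lemma ln_le x y : 0 < x -> x <= y -> ln x <= ln y.
Proof. intros H1 [H2|H2]; [left; apply ln_increasing; auto|subst; lra]. Qed.

Lemma ln_tangent z m : 0 < z -> 0 < m -> ln z <= ln m + z / m - 1.
Proof.
  intros Hz Hm. pose proof (exp_ineq1_le (ln (z / m))).
  rewrite exp_ln in H by (apply Rdiv_lt_0_compat; auto).
  unfold Rdiv in *. rewrite ln_mult in H by (auto; apply Rinv_0_lt_compat; auto).
  rewrite ln_Rinv in H by auto. lra.
Qed.

Lemma jensen n p Z : (forall j, (1 <= j <= n)%nat -> 0 <= p j) -> sumR 1 n p = 1 ->
  (forall j, (1 <= j <= n)%nat -> 0 < Z j) -> 0 < sumR 1 n (fun j => p j * Z j) ->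
  sumR 1 n (fun j => p j * ln (Z j)) <= ln (sumR 1 n (fun j => p j * Z j)).
Proof.
  intros Hp Hs HZ Hm. set (m := sumR 1 n (fun j => p j * Z j)) in *.
  eapply Rle_trans.
  { apply (sumR_le 1 n _ (fun j => ln m * p j + (/ m) * (p j * Z j) + (-1) * p j)).
    intros j Hj. pose proof (ln_tangent (Z j) m (HZ j Hj) Hm). pose proof (Hp j Hj).
    unfold Rdiv in H.
    replace (ln m * p j + / m * (p j * Z j) + -1 * p j) with (p j * (ln m + Z j * / m - 1)) by ring.
    apply Rmult_le_compat_l; auto. }
  rewrite !sumR_add, !sumR_scal. fold m. rewrite Hs. field_simplify; [lra|lra].
Qed.

Lemma INR_dist i j D : ((j + D < i) \/ (i + D < j))%nat -> INR D <= Rabs (INR i - INR j).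
Proof.
  intros [H|H].
  - apply lt_INR in H. rewrite plus_INR in H.
    eapply Rle_trans; [|apply Rle_abs]. lra.
  - apply lt_INR in H. rewrite plus_INR in H.
    rewrite Rabs_minus_sym. eapply Rle_trans; [|apply Rle_abs]. lra.
Qed.

Definition win (lo hi j : nat) : bool := andb (Nat.leb lo j) (Nat.leb j hi).

Lemma coupling_window n p phat g i D :
  is_coupling n p phat g -> (1 <= i <= n)%nat ->
  let lo := Nat.max 1 (i - D) in let hi := Nat.min n (i + D) in
  let out := sumR 1 n (fun j => if win lo hi j then 0 else g i j) in
  p i - out <= W n phat i D /\
  INR D * out <= sumR 1 n (fun y => g i y * Rabs (INR i - INR y)) /\ 0 <= out.
Proof.
  intros [Hg [Hr Hc]] Hi lo hi out.
  assert (Hgp : forall j, (1 <= j <= n)%nat -> g i j <= phat j).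
  { intros j Hj. rewrite <- (Hc j Hj). apply (sumR_single 1 n (fun x => g x j) i); try (intros; apply Hg); auto. }
  split; [|split].
  - assert (E : p i = sumR 1 n (fun j => if win lo hi j then g i j else 0) + out).
    { rewrite <- (Hr i Hi). unfold out. rewrite <- sumR_add. apply sumR_ext. intros j _.
      destruct (win lo hi j); lra. }
    assert (sumR 1 n (fun j => if win lo hi j then g i j else 0) <= W n phat i D).
    { unfold W. fold lo hi. rewrite <- (sumR_ind 1 n lo hi phat) by lia.
      apply sumR_le. intros j Hj. unfold win. destruct (andb _ _); [apply Hgp; auto|lra]. }
    lra.
  - unfold out. rewrite <- sumR_scal. apply sumR_le. intros j Hj.
    unfold win. destruct (Nat.leb_spec lo j); destruct (Nat.leb_spec j hi); simpl.
    all: try (rewrite Rmult_0_r; apply Rmult_le_pos; [apply Hg; auto|apply Rabs_pos]).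
    all: rewrite Rmult_comm; apply Rmult_le_compat_l; [apply Hg; auto|]; apply INR_dist; lia.
  - apply sumR_nonneg. intros j Hj. destruct (win lo hi j); [lra|apply Hg; auto].
Qed.

Lemma key_real p c W out D X Z : 0 < p <= 1 -> 0 <= c -> 0 <= out -> p - out <= W ->
  D * out <= c -> 0 < D -> X = D * D -> W <= 2 / X -> Z = 4 * Rmax 1 (c * c / p) -> X <= Z / p.
Proof.
  intros Hp Hc Ho HW HD HD0 HX HW2 HZ.
  assert (HXp : 0 < X) by (subst; nra).
  assert (Hm1 : 1 <= Rmax 1 (c * c / p)) by apply Rmax_l.
  assert (Hm2 : c * c / p <= Rmax 1 (c * c / p)) by apply Rmax_r.
  assert (Zp : Z / p = 4 / p * Rmax 1 (c * c / p)) by (subst; field; lra).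
  rewrite Zp.
  destruct (Rle_lt_dec out (p / 2)) as [Hle|Hlt].
  - assert (p / 2 <= 2 / X) by lra.
    assert (X <= 4 / p).
    { apply (Rmult_le_reg_r (p * X)); [nra|].
      unfold Rdiv in *. 
      replace (4 * / p * (p * X)) with (4 * X) by (field; lra).
      assert (p * / 2 * X <= 2 * / X * X) by (apply Rmult_le_compat_r; lra).
      replace (2 * / X * X) with 2 in H0 by (field; lra). nra. }
    assert (0 < 4 / p) by (apply Rdiv_lt_0_compat; lra).
    assert (4 / p <= 4 / p * Rmax 1 (c * c / p)) by (rewrite <- (Rmult_1_r (4/p)) at 1; apply Rmult_le_compat_l; lra).
    lra.
  - assert (D * p < 2 * c) by nra.
    assert (Dp : D < 2 * c / p) by (apply (Rmult_lt_reg_r p); [lra|]; unfold Rdiv; rewrite Rmult_assoc, Rinv_l; lra).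
    assert (X < 4 / p * (c * c / p)).
    { rewrite HX. replace (4 / p * (c * c / p)) with ((2 * c / p) * (2 * c / p)) by (field; lra).
      assert (0 <= 2 * c / p) by (apply Rmult_le_pos; [lra|left; apply Rinv_0_lt_compat; lra]).
      nra. }
    assert (0 < 4 / p) by (apply Rdiv_lt_0_compat; lra).
    assert (4 / p * (c * c / p) <= 4 / p * Rmax 1 (c * c / p)) by (apply Rmult_le_compat_l; lra).
    lra.
Qed.

Lemma key_real0 p c Z : 0 < p <= 1 -> Z = 4 * Rmax 1 (c * c / p) -> 2 <= Z / p.
Proof.
  intros Hp HZ. assert (Hm1 : 1 <= Rmax 1 (c * c / p)) by apply Rmax_l.
  assert (Zp : Z / p = 4 / p * Rmax 1 (c * c / p)) by (subst; field; lra).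
  rewrite Zp. assert (4 <= 4 / p).
  { apply (Rmult_le_reg_r p); [lra|]. unfold Rdiv. rewrite Rmult_assoc, Rinv_l; nra. }
  nra.
Qed.

Lemma pow2R_INR m : INR (2 ^ m) = 2 ^ m.
Proof. rewrite pow_INR. reflexivity. Qed.

Lemma per_key n p phat g i K : is_coupling n p phat g -> (1 <= i <= n)%nat ->
  0 < p i -> p i <= 1 -> sumR 1 n phat = 1 ->
  (K = 0%nat \/ ~ (sumR 1 n phat / 2 ^ (2 ^ (S (K - 1)) - 2 ^ 0) < W n phat i (2 ^ (2 ^ (K - 1))))) ->
  INR (2 ^ K) * ln 2 <=
  ln (4 * Rmax 1 (sumR 1 n (fun y => g i y * Rabs (INR i - INR y)) *
                  sumR 1 n (fun y => g i y * Rabs (INR i - INR y)) / p i) / p i).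
Proof.
  intros Hg Hi Hp Hp1 Hs HK.
  set (ci := sumR 1 n (fun y => g i y * Rabs (INR i - INR y))).
  set (Z := 4 * Rmax 1 (ci * ci / p i)).
  assert (Hci : 0 <= ci).
  { apply sumR_nonneg. intros j Hj. apply Rmult_le_pos; [apply Hg; auto|apply Rabs_pos]. }
  assert (Hmain : 2 ^ (2 ^ K) <= Z / p i).
  { destruct K as [|K'].
    - simpl. rewrite Rmult_1_r. apply (key_real0 _ ci); [lra|reflexivity].
    - destruct HK as [HK|HK]; [lia|].
      replace (S K' - 1)%nat with K' in HK by lia.
      rewrite Hs in HK. apply Rnot_lt_le in HK.
      destruct (coupling_window n p phat g i (2 ^ 2 ^ K') Hg Hi) as [A1 [A2 A3]].
      apply (key_real (p i) ci (W n phat i (2 ^ 2 ^ K'))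
        (sumR 1 n (fun j => if win (Nat.max 1 (i - 2 ^ 2 ^ K')) (Nat.min n (i + 2 ^ 2 ^ K')) j then 0 else g i j))
        (INR (2 ^ 2 ^ K')) (2 ^ 2 ^ S K') Z); auto.
      + rewrite pow2R_INR. apply pow_lt; lra.
      + rewrite pow2R_INR, <- pow_add. f_equal. simpl. lia.
      + eapply Rle_trans; [exact HK|].
        assert (E : (2 ^ 2 ^ S K' = 2 * 2 ^ (2 ^ S K' - 2 ^ 0))%R).
        { change (2 * 2 ^ (2 ^ S K' - 2 ^ 0))%R with (2 ^ S (2 ^ S K' - 2 ^ 0))%R.
          f_equal. pose proof (pow2_ge1 (S K')). rewrite Nat.pow_0_r. lia. }
        rewrite E. assert (0 < 2 ^ (2 ^ S K' - 2 ^ 0)) by (apply pow_lt; lra).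
        right. field. lra. }
  assert (0 < Z / p i) by (eapply Rlt_le_trans; [|exact Hmain]; apply pow_lt; lra).
  eapply Rle_trans; [|apply (ln_le _ _ (pow_lt 2 _ ltac:(lra)) Hmain)].
  rewrite ln_pow by lra. lra.
Qed.

Lemma ln2_pos : 0 < ln 2.
Proof. pose proof ln_lt_2. lra. Qed.

Lemma final_num c eta : 0 <= c -> c < eta + 1/4 ->
  4 * (ln (4 + 4 * (c * c)) / ln 2) + 2 <= 8 * log_term eta + 8.
Proof.
  intros Hc Hce. pose proof ln2_pos as L2.
  assert (E4 : ln (4 + 4 * (c * c)) = 2 * ln 2 + ln (1 + c * c)).
  { replace (4 + 4 * (c * c)) with (2 * 2 * (1 + c * c)) by ring.
    rewrite !ln_mult by nra. ring. }
  rewrite E4.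
  destruct (Rlt_le_dec eta 1) as [Hlt|Hge].
  - assert (HL : 1 <= log_term eta).
    { unfold log_term. destruct (Rlt_dec 0 eta); [apply Rmax_r|lra]. }
    assert (Hb : 2 * ln (1 + c * c) <= 3 * ln 2).
    { replace (2 * ln (1 + c * c)) with (ln ((1 + c * c) ^ 2)) by (rewrite ln_pow by nra; simpl; ring).
      replace (3 * ln 2) with (ln (2 ^ 3)) by (rewrite ln_pow by lra; simpl; ring).
      assert (c * c <= 25 / 16) by nra. apply ln_le; [nra|]. simpl. nra. }
    assert (ln (1 + c * c) / ln 2 <= 3 / 2).
    { apply (Rmult_le_reg_r (ln 2)); auto. unfold Rdiv. rewrite Rmult_assoc, Rinv_l by lra. lra. }
    assert (4 * ((2 * ln 2 + ln (1 + c * c)) / ln 2) = 8 + 4 * (ln (1 + c * c) / ln 2)) by (field; lra).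
    lra.
  - assert (Hpos : 0 < eta) by lra.
    assert (HL : log2 eta + 2 <= log_term eta).
    { unfold log_term. destruct (Rlt_dec 0 eta); [apply Rmax_l|lra]. }
    assert (Hb : ln (1 + c * c) <= 2 * ln 2 + 2 * ln eta).
    { replace (2 * ln 2 + 2 * ln eta) with (ln (2 * 2 * (eta * eta))) by (rewrite !ln_mult by nra; ring).
      apply ln_le; nra. }
    unfold log2 in HL.
    assert (4 * ((2 * ln 2 + ln (1 + c * c)) / ln 2) = 8 + 4 * (ln (1 + c * c) / ln 2)) by (field; lra).
    assert (ln (1 + c * c) / ln 2 <= 2 + 2 * (ln eta / ln 2)).
    { apply (Rmult_le_reg_r (ln 2)); auto.
      replace ((2 + 2 * (ln eta / ln 2)) * ln 2) with (2 * ln 2 + 2 * ln eta) by (field; lra).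
      unfold Rdiv. rewrite Rmult_assoc, Rinv_l by lra. lra. }
    lra.
Qed.

Lemma twoK K : (2 * K <= 2 ^ K + 0)%nat.
Proof.
  induction K as [|K IH]; [simpl; lia|].
  destruct K; [simpl; lia|]. rewrite Nat.pow_succ_r'. pose proof (pow2_ge1 (S K)). lia.
Qed.

Lemma cond_large n phat i : (1 <= i <= n)%nat -> sumR 1 n phat = 1 ->
  sumR 1 n phat / 2 ^ (2 ^ S n - 2 ^ 0) < W n phat i (2 ^ 2 ^ n).
Proof.
  intros Hi Hs.
  assert (Hn1 : (n < 2 ^ n)%nat) by (apply Nat.pow_gt_lin_r; lia).
  assert (Hn2 : (2 ^ n <= 2 ^ 2 ^ n)%nat) by (apply pow2_mono; apply Nat.lt_le_incl, Nat.pow_gt_lin_r; lia).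
  unfold W. replace (Nat.max 1 (i - 2 ^ 2 ^ n)) with 1%nat by lia.
  replace (Nat.min n (i + 2 ^ 2 ^ n)) with n by lia.
  rewrite Hs.
  assert (He : (1 <= 2 ^ S n - 2 ^ 0)%nat).
  { rewrite Nat.pow_0_r. rewrite Nat.pow_succ_r'. pose proof (pow2_ge1 n). lia. }
  assert (1 < 2 ^ (2 ^ S n - 2 ^ 0)).
  { destruct (2 ^ S n - 2 ^ 0)%nat as [|m]; [lia|]. simpl.
    pose proof (pow_le 2 m). assert (1 <= 2 ^ m) by (apply pow_R1_Rle; lra). lra. }
  apply (Rmult_lt_reg_r (2 ^ (2 ^ S n - 2 ^ 0))); [lra|].
  unfold Rdiv. rewrite Rmult_assoc, Rinv_l by lra. lra.
Qed.

Theorem theorem3p1 (n : nat) (a : nat -> R) (p phat : nat -> R) (eta : R)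
  (med : nat -> nat -> nat) :
  (1 <= n)%nat ->
  (forall i j, (1 <= i)%nat -> (i < j)%nat -> (j <= n)%nat -> a i < a j) ->
  is_distr n p -> is_distr n phat ->
  is_emd n p phat eta ->
  valid_median n phat med ->
  exists C : nat -> nat,
    (forall i, (1 <= i <= n)%nat ->
       exists fuel, algA a med fuel 0 1 n (a i) = Some (i, C i)) /\
    sumR 1 n (fun i => p i * INR (C i))
      <= 4 * entropy n p + 8 * log_term eta + 8.
Proof.
  intros Hn Hinc [Hp0 Hps] [Hph0 Hphs] Hemd Hmed.
  destruct (coupling_exists n p phat eta Hemd) as [g [Hg Hcost]].
  set (C := fun i => match algA a med (n + 2) 0 1 n (a i) with Some (_, c) => c | None => 0%nat end).
  set (ci := fun i => sumR 1 n (fun y => g i y * Rabs (INR i - INR y))).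
  set (cc := coupling_cost n g).
  assert (Hci : forall i, (1 <= i <= n)%nat -> 0 <= ci i).
  { intros i Hi. apply sumR_nonneg. intros j Hj. apply Rmult_le_pos; [apply Hg; auto|apply Rabs_pos]. }
  assert (Hcic : forall i, (1 <= i <= n)%nat -> ci i <= cc).
  { intros i Hi. apply (sumR_single 1 n ci i); auto. }
  assert (Hcc : 0 <= cc) by (apply sumR_nonneg; exact Hci).
  assert (Hkey : forall i, (1 <= i <= n)%nat ->
    algA a med (n + 2) 0 1 n (a i) = Some (i, C i) /\
    exists K, (K = 0%nat \/ ~ (sumR 1 n phat / 2 ^ (2 ^ (S (K - 1)) - 2 ^ 0) < W n phat i (2 ^ (2 ^ (K - 1))))) /\
      (C i <= 4 * 2 ^ K + 2)%nat).
  { intros i Hi.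
    destruct (min_exists (fun K => sumR 1 n phat / 2 ^ (2 ^ S K - 2 ^ 0) < W n phat i (2 ^ 2 ^ K)) n
      (cond_large n phat i Hi Hphs)) as [K [HK1 HK2]].
    destruct (algA_spec n a med phat i Hinc Hi Hmed Hph0 (n + 2) 0 1 n K) as [c [Ec Hc]]; try lia; auto.
    assert (ECi : C i = c) by (unfold C; rewrite Ec; reflexivity).
    split; [rewrite ECi; exact Ec|]. exists K. split; [exact HK2|].
    rewrite ECi. rewrite Nat.pow_succ_r', Nat.pow_0_r in Hc. pose proof (twoK K). pose proof (pow2_ge1 K). lia. }
  exists C. split.
  { intros i Hi. exists (n + 2)%nat. apply Hkey; auto. }
  set (Zf := fun i => if Req_EM_T (p i) 0 then 4 else 4 * Rmax 1 (ci i * ci i / p i)).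
  assert (HZpos : forall i, (1 <= i <= n)%nat -> 4 <= Zf i).
  { intros i Hi. unfold Zf. destruct (Req_EM_T (p i) 0); [lra|].
    pose proof (Rmax_l 1 (ci i * ci i / p i)). lra. }
  assert (Hp1 : forall i, (1 <= i <= n)%nat -> p i <= 1).
  { intros i Hi. rewrite <- Hps. apply sumR_single; auto. }
  pose proof ln2_pos as L2.
  assert (Hpt : forall i, (1 <= i <= n)%nat -> p i * INR (C i) <=
     4 * (- plogp (p i)) + 4 * (p i * ln (Zf i)) / ln 2 + 2 * p i).
  { intros i Hi. unfold plogp, Zf. destruct (Req_EM_T (p i) 0) as [E0|N0].
    - rewrite E0. lra.
    - assert (Hpp : 0 < p i) by (pose proof (Hp0 i Hi); lra).
      destruct (Hkey i Hi) as [_ [K [HK HCK]]].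
      pose proof (per_key n p phat g i K Hg Hi Hpp (Hp1 i Hi) Hphs HK) as PK. fold (ci i) in PK.
      set (Z := 4 * Rmax 1 (ci i * ci i / p i)) in *.
      assert (HZ0 : 0 < Z) by (pose proof (Rmax_l 1 (ci i * ci i / p i)); unfold Z; lra).
      unfold Rdiv in PK. rewrite ln_mult in PK by (auto; apply Rinv_0_lt_compat; auto).
      rewrite ln_Rinv in PK by auto.
      apply le_INR in HCK. rewrite plus_INR, mult_INR in HCK.
      assert (E2 : INR 4 = 4) by (simpl; ring). assert (E3 : INR 2 = 2) by (simpl; ring).
      rewrite E2, E3 in HCK.
      assert (Hb : INR (2 ^ K) <= (ln Z - ln (p i)) / ln 2).
      { apply (Rmult_le_reg_r (ln 2)); auto. unfold Rdiv. rewrite Rmult_assoc, Rinv_l by lra. lra. }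
      assert (INR (C i) <= 4 * ((ln Z - ln (p i)) / ln 2) + 2) by lra.
      unfold log2.
      replace (4 * - (p i * (ln (p i) / ln 2)) + 4 * (p i * ln Z) / ln 2 + 2 * p i)
        with (p i * (4 * ((ln Z - ln (p i)) / ln 2) + 2)) by (field; lra).
      apply Rmult_le_compat_l; lra. }
  eapply Rle_trans; [apply sumR_le; exact Hpt|].
  rewrite !sumR_add.
  replace (sumR 1 n (fun j => 4 * - plogp (p j))) with (4 * entropy n p).
  2:{ unfold entropy. rewrite sumR_scal. rewrite (sumR_ext 1 n (fun j => - plogp (p j)) (fun j => (-1) * plogp (p j)))
        by (intros; ring).
      rewrite sumR_scal. ring. }
  rewrite sumR_scal, Hps.
  replace (sumR 1 n (fun j => 4 * (p j * ln (Zf j)) / ln 2)) with (4 * / ln 2 * sumR 1 n (fun j => p j * ln (Zf j))).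
  2:{ rewrite <- sumR_scal. apply sumR_ext. intros; unfold Rdiv; ring. }
  assert (Hm : sumR 1 n (fun j => p j * Zf j) <= 4 + 4 * (cc * cc)).
  { eapply Rle_trans.
    { apply (sumR_le 1 n _ (fun j => 4 * p j + (4 * cc) * ci j)). intros j Hj.
      unfold Zf. destruct (Req_EM_T (p j) 0) as [E0|N0].
      - rewrite E0. pose proof (Hci j Hj). nra.
      - assert (Hpp : 0 < p j) by (pose proof (Hp0 j Hj); lra).
        assert (Rmax 1 (ci j * ci j / p j) <= 1 + ci j * ci j / p j).
        { apply Rmax_lub; [|]; assert (0 <= ci j * ci j / p j) by (apply Rmult_le_pos; [nra|left; apply Rinv_0_lt_compat; lra]); lra. }
        assert (p j * (4 * Rmax 1 (ci j * ci j / p j)) <= p j * (4 * (1 + ci j * ci j / p j))) by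
          (apply Rmult_le_compat_l; lra).
        replace (p j * (4 * (1 + ci j * ci j / p j))) with (4 * p j + 4 * (ci j * ci j)) in H0 by (field; lra).
        pose proof (Hci j Hj). pose proof (Hcic j Hj). nra. }
    rewrite sumR_add, !sumR_scal, Hps. fold cc. unfold cc, coupling_cost. fold ci. lra. }
  assert (Hm0 : 4 <= sumR 1 n (fun j => p j * Zf j)).
  { rewrite <- (Rmult_1_r 4), <- Hps, <- sumR_scal. apply sumR_le. intros j Hj.
    pose proof (HZpos j Hj). pose proof (Hp0 j Hj). nra. }
  pose proof (jensen n p Zf Hp0 Hps ltac:(intros j Hj; pose proof (HZpos j Hj); lra) ltac:(lra)) as J.
  assert (J2 : ln (sumR 1 n (fun j => p j * Zf j)) <= ln (4 + 4 * (cc * cc))) by (apply ln_le; lra).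
  pose proof (final_num cc eta Hcc Hcost) as F.
  assert (4 * / ln 2 * sumR 1 n (fun j => p j * ln (Zf j)) <= 4 * (ln (4 + 4 * (cc * cc)) / ln 2)).
  { unfold Rdiv. replace (4 * / ln 2 * sumR 1 n (fun j => p j * ln (Zf j))) with
      (4 * (sumR 1 n (fun j => p j * ln (Zf j)) * / ln 2)) by ring.
    apply Rmult_le_compat_l; [lra|]. apply Rmult_le_compat_r; [left; apply Rinv_0_lt_compat; lra|lra]. }
  lra.
Qed.
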